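(* If $\delta:\mathrm{Pol}(S^1)\oplus\mathrm{Pol}(S^1)\to C(S^1)\oplus C(S^1)$ is any derivation, then there exist functions $f,g\in C(S^1)$ such that $$\delta=\delta_{f,g}:=\Big(f(x)\frac{1}{i}\frac{d}{dx},\ g(x)\frac{1}{i}\frac{d}{dx}\Big).$$
   Context: $\mathrm{Pol}(S^1)$ is the algebra of trigonometric polynomials in $x$ (polynomials in $e^{ix},e^{-ix}$), regarded as a subalgebra of $C(S^1)$; $\mathrm{Pol}(S^1)\oplus\mathrm{Pol}(S^1)$ is a subalgebra of $C(S^1)\oplus C(S^1)$ with componentwise operations, and a derivation is a linear map into $C(S^1)\oplus C(S^1)$ satisfying the Leibniz rule with respect to this inclusion. *)

(* Defs.v *)
From Stdlib Require Import Reals.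
From Coquelicot Require Import Coquelicot.
Open Scope R_scope.

Definition cis (t : R) : C := (cos t, sin t).

(* Pol(S^1): trigonometric polynomials x |-> sum_{k=-N}^{N} c_k e^{ikx},
   viewed as (2 pi-periodic) functions R -> C.  Index j = k + N in 0..2N. *)
Definition trig_pol (p : R -> C) : Prop :=
  exists (N : nat) (c : nat -> C),
    forall x : R,
      p x = sum_n (fun j => Cmult (c j) (cis ((INR j - INR N) * x))) (2 * N).

(* C(S^1): continuous complex-valued functions on the circle, viewed as
   continuous 2 pi-periodic functions R -> C. *)
Definition cont_circle (f : R -> C) : Prop :=
  (forall x : R, continuous f x) /\ (forall x : R, f (x + 2 * PI) = f x).

(* A derivation delta : Pol(S^1) (+) Pol(S^1) -> C(S^1) (+) C(S^1), given by its
   two components delta (p, q) = (d1 p q, d2 p q); its values and the required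
   identities matter only on trigonometric polynomials. *)
Definition is_derivation (d1 d2 : (R -> C) -> (R -> C) -> (R -> C)) : Prop :=
  (forall p q, trig_pol p -> trig_pol q ->
      cont_circle (d1 p q) /\ cont_circle (d2 p q)) /\
  (forall p q p' q' (a b : C), trig_pol p -> trig_pol q -> trig_pol p' -> trig_pol q' ->
      forall x,
        d1 (fun y => a * p y + b * p' y)%C (fun y => a * q y + b * q' y)%C x
          = (a * d1 p q x + b * d1 p' q' x)%C /\
        d2 (fun y => a * p y + b * p' y)%C (fun y => a * q y + b * q' y)%C x
          = (a * d2 p q x + b * d2 p' q' x)%C) /\
  (forall p1 q1 p2 q2, trig_pol p1 -> trig_pol q1 -> trig_pol p2 -> trig_pol q2 ->
      forall x,
        d1 (fun y => p1 y * p2 y)%C (fun y => q1 y * q2 y)%C x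
          = (p1 x * d1 p2 q2 x + d1 p1 q1 x * p2 x)%C /\
        d2 (fun y => p1 y * p2 y)%C (fun y => q1 y * q2 y)%C x
          = (q1 x * d2 p2 q2 x + d2 p1 q1 x * q2 x)%C).

(* Main.v *)
Require Import Defs.
From Stdlib Require Import Reals Lra Lia FunctionalExtensionality.
From Coquelicot Require Import Coquelicot.
Open Scope R_scope.

Lemma cont_conv1 (g : R -> C) x :
  @continuous R_UniformSpace C_UniformSpace g x ->
  @continuous R_UniformSpace (AbsRing_UniformSpace C_AbsRing) g x.
Proof.
  intros H P HP. apply H. apply locally_C. exact HP.
Qed.
Lemma cont_conv2 (g : R -> C) x :
  @continuous R_UniformSpace (AbsRing_UniformSpace C_AbsRing) g x ->
  @continuous R_UniformSpace C_UniformSpace g x.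
Proof.
  intros H P HP. apply H. apply locally_C. exact HP.
Qed.

Lemma cont_Cmult (g h : R -> C) x :
  @continuous R_UniformSpace C_UniformSpace g x ->
  @continuous R_UniformSpace C_UniformSpace h x ->
  @continuous R_UniformSpace C_UniformSpace (fun y => (g y * h y)%C) x.
Proof.
  intros Hg Hh. apply cont_conv2.
  apply (@continuous_mult R_UniformSpace C_AbsRing g h x); apply cont_conv1; assumption.
Qed.

Lemma is_derive_fst (p : R -> C) x dp : is_derive p x dp -> is_derive (fun y => fst (p y)) x (fst dp).
Proof.
  intros H. unfold is_derive in *.
  apply (filterdiff_comp p (fun t : prod_NormedModule R_AbsRing R_NormedModule R_NormedModule => fst t) _ (fun t => fst t) H).
  apply filterdiff_linear, is_linear_fst.
Qed.
Lemma is_derive_snd (p : R -> C) x dp : is_derive p x dp -> is_derive (fun y => snd (p y)) x (snd dp).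
Proof.
  intros H. unfold is_derive in *.
  apply (filterdiff_comp p (fun t : prod_NormedModule R_AbsRing R_NormedModule R_NormedModule => snd t) _ (fun t => snd t) H).
  apply filterdiff_linear, is_linear_snd.
Qed.
Lemma is_derive_C_unique (p : R -> C) x d1 d2 : is_derive p x d1 -> is_derive p x d2 -> d1 = d2.
Proof.
  intros H1 H2. destruct d1 as [a b], d2 as [c d].
  pose proof (is_derive_unique _ _ _ (is_derive_fst _ _ _ H1)) as A1.
  pose proof (is_derive_unique _ _ _ (is_derive_fst _ _ _ H2)) as A2.
  pose proof (is_derive_unique _ _ _ (is_derive_snd _ _ _ H1)) as B1.
  pose proof (is_derive_unique _ _ _ (is_derive_snd _ _ _ H2)) as B2.
  simpl in *. f_equal; congruence.
Qed.

Lemma is_derive_pairC (u v : R -> R) x du dv :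
  is_derive u x du -> is_derive v x dv ->
  @is_derive R_AbsRing (prod_NormedModule R_AbsRing R_NormedModule R_NormedModule)
    (fun y => ((u y, v y) : C)) x ((du, dv) : C).
Proof.
  intros Hu Hv.
  pose proof (@is_derive_scal_l R_AbsRing (prod_NormedModule R_AbsRing R_NormedModule R_NormedModule) u x du ((1,0):C) Hu) as H1.
  pose proof (@is_derive_scal_l R_AbsRing (prod_NormedModule R_AbsRing R_NormedModule R_NormedModule) v x dv ((0,1):C) Hv) as H2.
  pose proof (is_derive_plus _ _ _ _ _ H1 H2) as H3.
  simpl in H3. unfold plus, scal in H3. simpl in H3. unfold prod_plus, prod_scal in H3. simpl in H3.
  unfold scal, plus in H3; simpl in H3. unfold mult in H3; simpl in H3.
  assert (E : forall a b : R, (a * 1 + b * 0, a * 0 + b * 1) = (a, b)).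
  { intros; f_equal; ring. }
  rewrite E in H3.
  eapply is_derive_ext; [|exact H3]. intro t. simpl. rewrite E. reflexivity.
Qed.
Lemma cis_add a b : cis (a + b) = (cis a * cis b)%C.
Proof. unfold cis, Cmult; simpl. rewrite cos_plus, sin_plus. f_equal; ring. Qed.

Lemma is_derive_mono (c : C) (k x : R) :
  is_derive (fun y => (c * cis (k * y))%C) x (c * (Ci * RtoC k) * cis (k * x))%C.
Proof.
  destruct c as [a b].
  replace ((a, b) * (Ci * RtoC k) * cis (k * x))%C with
    (((a * (- sin (k*x) * k) - b * (cos (k*x) * k)), (a * (cos (k*x) * k) + b * (- sin (k*x) * k))) : C).
  2:{ unfold cis, Cmult, Ci, RtoC; simpl. f_equal; ring. }
  eapply is_derive_ext.
  2:{ apply (is_derive_pairC (fun y => a * cos (k*y) - b * sin (k*y)) (fun y => a * sin (k*y) + b * cos (k*y))); auto_derive; auto; ring. }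
  { intro t. unfold cis, Cmult. simpl. reflexivity. }
Qed.
Lemma sum_filter (g : nat -> C) n k :
  sum_n (fun j => if Nat.leb j n then g j else (RtoC 0)) (n + k) = sum_n g n.
Proof.
  induction k.
  - rewrite Nat.add_0_r. apply sum_n_ext_loc. intros j Hj.
    destruct (Nat.leb_spec j n); [reflexivity | lia].
  - rewrite Nat.add_succ_r, sum_Sn, IHk.
    destruct (Nat.leb_spec (S (n + k)) n); [lia|].
    apply Cplus_0_r.
Qed.

Lemma sum_single (g : nat -> C) i m :
  sum_n (fun j => if Nat.eqb j i then g j else (RtoC 0)) m = if Nat.leb i m then g i else (RtoC 0).
Proof.
  induction m.
  - rewrite sum_O. destruct (Nat.eqb_spec 0 i); destruct (Nat.leb_spec i 0); subst; try reflexivity; lia.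
  - rewrite sum_Sn, IHm.
    destruct (Nat.eqb_spec (S m) i); destruct (Nat.leb_spec i m); destruct (Nat.leb_spec i (S m));
      subst; try lia; first [apply Cplus_0_r | apply Cplus_0_l | reflexivity].
Qed.

Definition term (N : nat) (c : nat -> C) (j : nat) (y : R) : C :=
  (c j * cis ((INR j - INR N) * y))%C.

Lemma trig_partial N c n : (n <= 2 * N)%nat ->
  trig_pol (fun y => sum_n (fun j => term N c j y) n).
Proof.
  intros Hn. exists N, (fun j => if Nat.leb j n then c j else (RtoC 0)). intro x.
  replace (2 * N)%nat with (n + (2 * N - n))%nat by lia.
  symmetry. transitivity (sum_n (fun j => if Nat.leb j n then term N c j x else RtoC 0) (n + (2*N-n))).
  - apply sum_n_ext; intro j; unfold term; destruct (Nat.leb j n); [reflexivity | apply Cmult_0_l].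
  - apply sum_filter.
Qed.

Lemma trig_mono N i (a : C) (r : R) : (i <= 2 * N)%nat -> r = INR i - INR N ->
  trig_pol (fun y => (a * cis (r * y))%C).
Proof.
  intros Hi Hr. subst r. exists N, (fun j => if Nat.eqb j i then a else (RtoC 0)). intro x.
  transitivity (sum_n (fun j => if Nat.eqb j i then (a * cis ((INR j - INR N) * x))%C else (RtoC 0)) (2 * N)).
  - rewrite sum_single. destruct (Nat.leb_spec i (2 * N)); [|lia].
    reflexivity.
  - apply sum_n_ext. intro j. destruct (Nat.eqb_spec j i); [subst; reflexivity | symmetry; apply Cmult_0_l].
Qed.

Definition E (r : R) : R -> C := fun y => cis (r * y).

Lemma E_eq r : E r = (fun y => (1 * cis (r * y))%C).
Proof. apply functional_extensionality; intro y. unfold E. symmetry; apply Cmult_1_l. Qed.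

Lemma trig_E_pos (n : nat) : trig_pol (E (INR n)).
Proof. rewrite E_eq. apply (trig_mono n (2 * n)); [lia|]. rewrite mult_INR. simpl. ring. Qed.
Lemma trig_E_neg (n : nat) : trig_pol (E (- INR n)).
Proof. rewrite E_eq. apply (trig_mono n 0); [lia|]. simpl. ring. Qed.
Lemma trig_E1 : trig_pol (E 1).
Proof. replace 1 with (INR 1) by reflexivity. apply trig_E_pos. Qed.
Lemma trig_Em1 : trig_pol (E (-1)).
Proof. replace (-1) with (- INR 1) by (simpl; ring). apply trig_E_neg. Qed.
Lemma trig_E0 : trig_pol (E 0).
Proof. replace 0 with (INR 0) by reflexivity. apply trig_E_pos. Qed.

Definition zero : R -> C := fun _ => (RtoC 0).
Definition one : R -> C := fun _ => (RtoC 1).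
Lemma E0_one : E 0 = one.
Proof. apply functional_extensionality; intro y. unfold E, one, cis. rewrite Rmult_0_l, cos_0, sin_0. reflexivity. Qed.
Lemma trig_one : trig_pol one.
Proof. rewrite <- E0_one. apply trig_E0. Qed.
Lemma trig_zero : trig_pol zero.
Proof.
  replace zero with (fun y => (0 * cis (0 * y))%C).
  - apply (trig_mono 0 0); [lia|simpl; ring].
  - apply functional_extensionality; intro y. apply Cmult_0_l.
Qed.

Definition linD (D : (R -> C) -> (R -> C)) := forall p p' (a b : C), trig_pol p -> trig_pol p' ->
  forall x, D (fun y => a * p y + b * p' y)%C x = (a * D p x + b * D p' x)%C.
Definition leibD (D : (R -> C) -> (R -> C)) := forall p1 p2, trig_pol p1 -> trig_pol p2 ->
  forall x, D (fun y => p1 y * p2 y)%C x = (p1 x * D p2 x + D p1 x * p2 x)%C.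

Lemma lc1 (L Rr P1 Q1 k1 : C) : (L - Rr = k1 * (P1 - Q1))%C -> P1 = Q1 -> L = Rr.
Proof. intros H H1. rewrite H1 in H. transitivity ((L - Rr) + Rr)%C; [ring|]. rewrite H. ring. Qed.
Lemma lc2 (L Rr P1 Q1 P2 Q2 k1 k2 : C) : (L - Rr = k1 * (P1 - Q1) + k2 * (P2 - Q2))%C -> P1 = Q1 -> P2 = Q2 -> L = Rr.
Proof. intros H H1 H2. rewrite H1, H2 in H. transitivity ((L - Rr) + Rr)%C; [ring|]. rewrite H. ring. Qed.

Lemma sum_Sn_C (a : nat -> C) n : sum_n a (S n) = (sum_n a n + a (S n))%C.
Proof. exact (sum_Sn a n). Qed.

Lemma E_mul r s : E (r + s) = (fun y => E r y * E s y)%C.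
Proof. apply functional_extensionality; intro y. unfold E. rewrite <- cis_add. f_equal; ring. Qed.

Lemma E1_Em1 x : (E 1 x * E (-1) x)%C = RtoC 1.
Proof. unfold E. rewrite <- cis_add. replace (1 * x + -1 * x) with 0 by ring. unfold cis. rewrite cos_0, sin_0. reflexivity. Qed.

Section Single.
Variable D : (R -> C) -> (R -> C).
Hypothesis HL : linD D.
Hypothesis HB : leibD D.

Let f := fun x => (D (E 1) x * E (-1) x)%C.

Lemma DE0 x : D (E 0) x = RtoC 0.
Proof.
  pose proof (HB _ _ trig_E0 trig_E0 x) as H.
  replace (fun y => E 0 y * E 0 y)%C with (E 0) in H.
  2:{ rewrite E0_one. apply functional_extensionality; intro y. unfold one. symmetry; apply Cmult_1_l. }
  rewrite E0_one in *. unfold one in *.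
  refine (lc1 _ _ _ _ (RtoC (-1)) _ H). ring.
Qed.

Lemma DEm1 x : D (E (-1)) x = (- E (-1) x * f x)%C.
Proof.
  pose proof (HB _ _ trig_E1 trig_Em1 x) as H.
  replace (fun y => E 1 y * E (-1) y)%C with (E 0) in H.
  2:{ replace 0 with (1 + -1) by ring. apply E_mul. }
  rewrite DE0 in H. unfold f.
  refine (lc2 _ _ _ _ _ _ (- D (E (-1)) x) (E (-1) x) _ (E1_Em1 x) (eq_sym H)).
  ring.
Qed.

Lemma DEpos n x : D (E (INR n)) x = (RtoC (INR n) * E (INR n) x * f x)%C.
Proof.
  revert x; induction n; intro x.
  - simpl. rewrite DE0. ring.
  - rewrite S_INR, E_mul, HB by (apply trig_E_pos || apply trig_E1).
    cbv beta. rewrite IHn, RtoC_plus. unfold f.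
    refine (lc1 _ _ _ _ (- E (INR n) x * D (E 1) x) _ (E1_Em1 x)).
    ring.
Qed.

Lemma DEneg n x : D (E (- INR n)) x = (RtoC (- INR n) * E (- INR n) x * f x)%C.
Proof.
  revert x; induction n; intro x.
  - simpl. rewrite Ropp_0, DE0. ring.
  - rewrite S_INR, Ropp_plus_distr, E_mul, HB by (apply trig_E_neg || apply trig_Em1).
    cbv beta. rewrite IHn, DEm1. replace (- (1)) with (-1) by ring. rewrite ?RtoC_plus, ?RtoC_opp. ring.
Qed.

Lemma DEint (j N : nat) x : D (E (INR j - INR N)) x = (RtoC (INR j - INR N) * E (INR j - INR N) x * f x)%C.
Proof.
  destruct (Nat.le_gt_cases N j).
  - replace (INR j - INR N) with (INR (j - N)) by (rewrite minus_INR; [ring|lia]). apply DEpos.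
  - replace (INR j - INR N) with (- INR (N - j)) by (rewrite minus_INR; [ring|lia]). apply DEneg.
Qed.

Definition dterm (N : nat) (c : nat -> C) (j : nat) (x : R) : C :=
  (c j * (Ci * RtoC (INR j - INR N)) * cis ((INR j - INR N) * x))%C.

Lemma Dterm N c j x : (j <= 2 * N)%nat -> D (fun y => term N c j y) x = (f x * / Ci * dterm N c j x)%C.
Proof.
  intros Hj.
  replace (fun y => term N c j y) with (fun y => c j * E (INR j - INR N) y + RtoC 0 * E (INR j - INR N) y)%C.
  2:{ apply functional_extensionality; intro y. unfold term, E. ring. }
  rewrite HL by (rewrite E_eq; apply (trig_mono N j); auto).
  rewrite DEint. unfold dterm, E. field. apply Ci_nz.
Qed.

Lemma Dpartial N c n x : (n <= 2 * N)%nat ->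
  D (fun y => sum_n (fun j => term N c j y) n) x = (f x * / Ci * sum_n (fun j => dterm N c j x) n)%C.
Proof.
  induction n; intro Hn.
  - replace (fun y => sum_n (fun j => term N c j y) 0) with (fun y => term N c 0 y).
    2:{ apply functional_extensionality; intro y. rewrite sum_O. reflexivity. }
    rewrite sum_O. apply Dterm. lia.
  - replace (fun y => sum_n (fun j => term N c j y) (S n)) with
      (fun y => RtoC 1 * sum_n (fun j => term N c j y) n + RtoC 1 * term N c (S n) y)%C.
    2:{ apply functional_extensionality; intro y. rewrite sum_Sn_C. ring. }
    rewrite HL.
    + rewrite IHn by lia. rewrite Dterm by lia. rewrite sum_Sn_C. ring.
    + apply trig_partial; lia.
    + apply (trig_mono N (S n)); [lia| reflexivity].
Qed.

Lemma derive_partial N c n x :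
  is_derive (fun y => sum_n (fun j => term N c j y) n) x (sum_n (fun j => dterm N c j x) n).
Proof.
  induction n.
  - apply (is_derive_ext (fun t => term N c 0 t)). { intro t. rewrite sum_O. reflexivity. }
    rewrite sum_O. apply is_derive_mono.
  - pose proof (@is_derive_plus R_AbsRing (prod_NormedModule R_AbsRing R_NormedModule R_NormedModule) _ _ x _ _ IHn (is_derive_mono (c (S n)) (INR (S n) - INR N) x)) as H.
    replace (sum_n (fun j => dterm N c j x) (S n)) with (sum_n (fun j => dterm N c j x) n + dterm N c (S n) x)%C by (symmetry; apply sum_Sn_C).
    eapply is_derive_ext; [|exact H]. intro t. cbv beta. rewrite sum_Sn_C. reflexivity.
Qed.

Lemma single_main : forall p, trig_pol p -> forall x dp, is_derive p x dp -> D p x = (f x * / Ci * dp)%C.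
Proof.
  intros p [N [c Hp]] x dp Hd.
  assert (Ep : p = fun y => sum_n (fun j => term N c j y) (2 * N)).
  { apply functional_extensionality; intro y. rewrite Hp. reflexivity. }
  subst p.
  rewrite (is_derive_C_unique _ _ _ _ Hd (derive_partial N c (2 * N) x)).
  apply Dpartial. lia.
Qed.

End Single.

Lemma Em1_cont x : continuous (E (-1)) x.
Proof.
  assert (H : @ex_derive R_AbsRing (prod_NormedModule R_AbsRing R_NormedModule R_NormedModule) (E (-1)) x).
  { exists (RtoC 1 * (Ci * RtoC (-1)) * cis (-1 * x))%C.
    apply (is_derive_ext (fun y => (RtoC 1 * cis (-1 * y))%C)).
    { intro t. unfold E. apply Cmult_1_l. }
    apply is_derive_mono. }
  exact (@ex_derive_continuous R_AbsRing (prod_NormedModule R_AbsRing R_NormedModule R_NormedModule) (E (-1)) x H).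
Qed.

Lemma Em1_per x : E (-1) (x + 2 * PI) = E (-1) x.
Proof.
  unfold E. replace (-1 * (x + 2 * PI)) with (-1 * x + - (2 * PI)) by ring.
  rewrite cis_add. unfold cis at 2. rewrite cos_neg, sin_neg, cos_2PI, sin_2PI, Ropp_0.
  change ((1,0) : C) with (RtoC 1). apply Cmult_1_r.
Qed.

Lemma f_cont (g : R -> C) : cont_circle g -> cont_circle (fun x => (g x * E (-1) x)%C).
Proof.
  intros [Hc Hp]. split.
  - intro x. apply cont_Cmult; [apply Hc | apply Em1_cont].
  - intro x. rewrite Hp, Em1_per. reflexivity.
Qed.

Theorem mainTheorem13 :
  forall d1 d2 : (R -> C) -> (R -> C) -> (R -> C),
    is_derivation d1 d2 ->
    exists f g : R -> C,
      cont_circle f /\ cont_circle g /\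
      forall p q : R -> C, trig_pol p -> trig_pol q ->
        forall (x : R) (dp dq : C),
          is_derive p x dp -> is_derive q x dq ->
          d1 p q x = (f x * / Ci * dp)%C /\ d2 p q x = (g x * / Ci * dq)%C.
Proof.
  intros d1 d2 [Hc [Hlin Hleib]].
  assert (Z1 : forall a b : C, (fun y => a * zero y + b * zero y)%C = zero).
  { intros a b. apply functional_extensionality; intro y. unfold zero. ring. }
  assert (Z2 : (fun y => zero y * zero y)%C = zero).
  { apply functional_extensionality; intro y. unfold zero. ring. }
  assert (O1 : forall q, (fun y => one y * q y)%C = q).
  { intros q. apply functional_extensionality; intro y. unfold one. ring. }
  assert (L1 : forall p, (fun y => RtoC 1 * p y + RtoC 1 * zero y)%C = p).
  { intros p. apply functional_extensionality; intro y. unfold zero. ring. }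
  assert (L2 : forall p, (fun y => RtoC 1 * zero y + RtoC 1 * p y)%C = p).
  { intros p. apply functional_extensionality; intro y. unfold zero. ring. }
  set (D1 := fun p => d1 p zero). set (D2 := fun q => d2 zero q).
  assert (lin1 : linD D1).
  { intros p p' a b Hp Hp' x. unfold D1.
    destruct (Hlin p zero p' zero a b Hp trig_zero Hp' trig_zero x) as [H _].
    rewrite Z1 in H. exact H. }
  assert (lin2 : linD D2).
  { intros p p' a b Hp Hp' x. unfold D2.
    destruct (Hlin zero p zero p' a b trig_zero Hp trig_zero Hp' x) as [_ H].
    rewrite Z1 in H. exact H. }
  assert (leib1 : leibD D1).
  { intros p1 p2 H1 H2 x. unfold D1.
    destruct (Hleib p1 zero p2 zero H1 trig_zero H2 trig_zero x) as [H _].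
    rewrite Z2 in H. exact H. }
  assert (leib2 : leibD D2).
  { intros p1 p2 H1 H2 x. unfold D2.
    destruct (Hleib zero p1 zero p2 trig_zero H1 trig_zero H2 x) as [_ H].
    rewrite Z2 in H. exact H. }
  assert (R1 : forall p q, trig_pol p -> trig_pol q -> forall x, d1 p q x = D1 p x).
  { intros p q Hp Hq x. unfold D1.
    destruct (Hleib zero one zero q trig_zero trig_one trig_zero Hq x) as [H0 _].
    rewrite Z2, O1 in H0.
    destruct (Hlin p zero zero q (RtoC 1) (RtoC 1) Hp trig_zero trig_zero Hq x) as [H _].
    rewrite L1, L2, H0 in H. rewrite H. unfold zero. ring. }
  assert (R2 : forall p q, trig_pol p -> trig_pol q -> forall x, d2 p q x = D2 q x).
  { intros p q Hp Hq x. unfold D2.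
    destruct (Hleib one zero p zero trig_one trig_zero Hp trig_zero x) as [_ H0].
    rewrite Z2, O1 in H0.
    destruct (Hlin p zero zero q (RtoC 1) (RtoC 1) Hp trig_zero trig_zero Hq x) as [_ H].
    rewrite L1, L2, H0 in H. rewrite H. unfold zero. ring. }
  exists (fun x => (D1 (E 1) x * E (-1) x)%C), (fun x => (D2 (E 1) x * E (-1) x)%C).
  split; [|split].
  - apply f_cont. exact (proj1 (Hc (E 1) zero trig_E1 trig_zero)).
  - apply f_cont. exact (proj2 (Hc zero (E 1) trig_zero trig_E1)).
  - intros p q Hp Hq x dp dq Hdp Hdq. split.
    + rewrite R1 by assumption. apply (single_main D1 lin1 leib1 p Hp x dp Hdp).
    + rewrite R2 by assumption. apply (single_main D2 lin2 leib2 q Hq x dq Hdq).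
Qed.
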